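(* Let $g\ge2$ be an integer and let $k,d_1,d_2,d_3,\ell,m,n$ be positive integers with $1\le d_1,d_2,d_3\le g-1$, $\ell\le m\le n$ and $n\ge 2$, satisfying $$F_k=d_1\frac{g^\ell-1}{g-1}\cdot d_2\frac{g^m-1}{g-1}\cdot d_3\frac{g^n-1}{g-1}.$$ Then $$k<3n\frac{\log g}{\log\alpha}+2<10n\log g,$$ where $\alpha=(1+\sqrt5)/2$.
   Context: $(F_n)_{n\ge 0}$ is the Fibonacci sequence: $F_0=0$, $F_1=1$, $F_{n+2}=F_{n+1}+F_n$. $\log$ is the natural logarithm. *)

(* Defs.v *)
From Stdlib Require Import Reals Arith.
Open Scope R_scope.

Fixpoint fib (n : nat) : nat :=
  match n with
  | O => 0%nat
  | S O => 1%nat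
  | S (S p as q) => (fib q + fib p)%nat
  end.

Definition alpha : R := (1 + sqrt 5) / 2.

(* Main.v *)
Require Import Defs.
From Stdlib Require Import Reals Arith Lra Lia.
Open Scope R_scope.

Lemma alpha_gt : 1.6 < alpha.
Proof.
  unfold alpha.
  assert (2.2 < sqrt 5).
  { rewrite <- (sqrt_square 2.2) by lra. apply sqrt_lt_1; lra. }
  lra.
Qed.

Lemma alpha_sq : alpha * alpha = alpha + 1.
Proof.
  unfold alpha. assert (H := sqrt_sqrt 5). assert (0 <= 5) by lra.
  specialize (H H0). nra.
Qed.

Lemma fib_lb : forall k, alpha ^ k <= alpha * INR (fib (S k)).
Proof.
  assert (Ha := alpha_gt). assert (Hs := alpha_sq).
  assert (H : forall k, alpha ^ k <= alpha * INR (fib (S k)) /\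
                         alpha ^ (S k) <= alpha * INR (fib (S (S k)))).
  { induction k as [|k [IH1 IH2]].
    - simpl. lra.
    - split; [exact IH2|].
      change (fib (S (S (S k)))) with (fib (S (S k)) + fib (S k))%nat.
      rewrite plus_INR.
      replace (alpha ^ S (S k)) with (alpha ^ S k + alpha ^ k).
      + lra.
      + simpl. replace (alpha * (alpha * alpha ^ k)) with ((alpha*alpha) * alpha ^k) by ring.
        rewrite Hs. ring. }
  intro k; apply H.
Qed.

Lemma factor_bd (g d j : nat) : (2 <= g)%nat -> (1 <= d <= g - 1)%nat ->
  0 <= INR d * (INR g ^ j - 1) / (INR g - 1) <= INR g ^ j - 1.
Proof.
  intros Hg Hd.
  assert (HG : 2 <= INR g) by (apply (le_INR 2); lia).
  assert (Hd1 : 1 <= INR d) by (apply (le_INR 1); lia).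
  assert (Hd2 : INR d <= INR g - 1).
  { change (INR d <= INR g - INR 1). rewrite <- (minus_INR g 1) by lia. apply le_INR; lia. }
  assert (Hp : 1 <= INR g ^ j) by (apply pow_R1_Rle; lra).
  split.
  - apply Rmult_le_pos. apply Rmult_le_pos; lra.
    left; apply Rinv_0_lt_compat; lra.
  - unfold Rdiv. apply (Rmult_le_reg_r (INR g - 1)). lra.
    rewrite Rmult_assoc, Rinv_l by lra. nra.
Qed.

Theorem lemma3p1 (g k d1 d2 d3 l m n : nat) :
  (2 <= g)%nat ->
  (1 <= k)%nat -> (1 <= l)%nat ->
  (1 <= d1 <= g - 1)%nat -> (1 <= d2 <= g - 1)%nat -> (1 <= d3 <= g - 1)%nat ->
  (l <= m)%nat -> (m <= n)%nat -> (2 <= n)%nat ->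
  INR (fib k) =
    (INR d1 * (INR g ^ l - 1) / (INR g - 1)) *
    (INR d2 * (INR g ^ m - 1) / (INR g - 1)) *
    (INR d3 * (INR g ^ n - 1) / (INR g - 1)) ->
  INR k < 3 * INR n * (ln (INR g) / ln alpha) + 2 /\
  3 * INR n * (ln (INR g) / ln alpha) + 2 < 10 * INR n * ln (INR g).
Proof.
  intros Hg Hk Hl H1 H2 H3 Hlm Hmn Hn HF.
  assert (HG : 2 <= INR g) by (apply (le_INR 2); lia).
  assert (HN : 2 <= INR n) by (apply (le_INR 2); lia).
  assert (Ha := alpha_gt).
  assert (Hln2 := ln_lt_2).
  assert (HlnG : ln 2 <= ln (INR g)).
  { destruct (Req_dec (INR g) 2) as [E|E]; [rewrite E; lra|].
    left; apply ln_increasing; lra. }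
  assert (Hlna : 2/5 <= ln alpha).
  { assert (E3 : 1 <= ln 3).
    { rewrite <- ln_exp with 1. destruct (Req_dec (exp 1) 3) as [E|E].
      rewrite E; lra. left; apply ln_increasing. apply exp_pos.
      assert (Hx := exp_le_3). lra. }
    assert (ln 9 <= ln (alpha ^ 5)).
    { left; apply ln_increasing. lra.
      assert (1.6 ^ 5 <= alpha ^ 5) by (apply pow_incr; lra). lra. }
    rewrite ln_pow in H by lra.
    replace 9 with (3*3) in H by lra. rewrite ln_mult in H by lra.
    simpl in H. lra. }
  split.
  -
    destruct (factor_bd g d1 l Hg H1) as [A0 A1].
    destruct (factor_bd g d2 m Hg H2) as [B0 B1].
    destruct (factor_bd g d3 n Hg H3) as [C0 C1].
    set (A := INR d1 * (INR g ^ l - 1) / (INR g - 1)) in *.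
    set (B := INR d2 * (INR g ^ m - 1) / (INR g - 1)) in *.
    set (C := INR d3 * (INR g ^ n - 1) / (INR g - 1)) in *.
    assert (Pl : INR g ^ l <= INR g ^ n) by (apply Rle_pow; lra || lia).
    assert (Pm : INR g ^ m <= INR g ^ n) by (apply Rle_pow; lra || lia).
    assert (Hlt : INR (fib k) < INR g ^ (3 * n)).
    { rewrite HF. replace (3 * n)%nat with (n + n + n)%nat by lia.
      rewrite !pow_add.
      assert (A*B <= (INR g ^ n) * (INR g ^ n)).
      { apply Rmult_le_compat; lra. }
      assert (0 <= A * B) by (apply Rmult_le_pos; lra).
      assert (1 <= INR g ^ n) by (apply pow_R1_Rle; lra).
      nra. }
    destruct k as [|k']; [lia|].
    assert (Hb := fib_lb k').
    assert (Hc : alpha ^ k' < alpha * INR g ^ (3 * n)) by nra.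
    apply ln_increasing in Hc; [|apply pow_lt; lra].
    rewrite ln_mult, !ln_pow in Hc by (try apply pow_lt; lra).
    rewrite S_INR, mult_INR in *. simpl (INR 3) in *.
    assert (INR k' < 1 + 3 * INR n * ln (INR g) / ln alpha).
    { apply (Rmult_lt_reg_r (ln alpha)). lra.
      unfold Rdiv. rewrite Rmult_plus_distr_r, Rmult_assoc, Rinv_l by lra. lra. }
    unfold Rdiv in *. lra.
  - assert (E : 3 * INR n * (ln (INR g) / ln alpha) <= 7.5 * INR n * ln (INR g)).
    { unfold Rdiv. rewrite <- Rmult_assoc.
      assert (0 < 3 * INR n * ln (INR g)) by (apply Rmult_lt_0_compat; lra).
      assert (/ ln alpha <= 2.5).
      { replace 2.5 with (/ (2/5)) by lra. apply Rinv_le_contravar; lra. }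
      nra. }
    nra.
Qed.
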